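(* Let $\underline{X}$ be an observation from a distribution $P_{(\theta,\underline{\eta})}$ indexed by $(\theta,\underline{\eta})$ in a parameter space $H$, with real parameter of interest $\theta$ ranging over $[A,B]$ (possibly $B=+\infty$ or $A=-\infty$), and fix $\alpha\in[0,1]$. For a lower one-sided confidence interval $C(\underline{X})=[L(\underline{X}),B]$ with $L\ge A$, define its modification $C^M$ by $$h(\underline{x},\theta_0)=\sup_{(\theta,\underline{\eta})\in H,\ \theta\le\theta_0}P_{(\theta,\underline{\eta})}\big(L(\underline{x})\le L(\underline{X})\big),\qquad C^M(\underline{x})=\overline{\{\theta_0: h(\underline{x},\theta_0)>\alpha\}}$$ (this is the h-function of the test statistic $\theta_0-L(\underline{x})$ for $H_0:\theta\le\theta_0$ vs $H_A:\theta>\theta_0$). Let $C_l(\underline{X})=[L_l(\underline{X}),B]$ be a lower one-sided confidence interval of any level, let $C_l^{M1}=C_l^M$, $C_l^{M(k+1)}=(C_l^{Mk})^M$, and $C_l^{M\infty}=\bigcap_{k\ge1}C_l^{Mk}$. Then: (i) $C_l^M(\underline{X})$ is of level $1-\alpha$, i.e. $\inf_{(\theta,\underline{\eta})\in H}P_{(\theta,\underline{\eta})}(\theta\in C_l^M(\underline{X}))\ge1-\alpha$; (ii) $C_l^{M\infty}(\underline{X})=C_l^M(\underline{X})$; (iii) writing $C_l^M(\underline{X})=[L_l^M(\underline{X}),B]$, $C_l^M$ is the smallest interval in the class $\mathcal{C}_l$ of all $1-\alpha$ exact lower one-sided intervals $C(\underline{X})=[L(\underline{X}),B]$ such that for all $\underline{x}',\underline{x}$: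 $L(\underline{x}')\le L(\underline{x})$ whenever $L_l(\underline{x}')\le L_l(\underline{x})$, and $L(\underline{x}')=L(\underline{x})$ whenever $L_l(\underline{x}')=L_l(\underline{x})$; i.e. for any $C=[L,B]\in\mathcal{C}_l$, $L_l^M(\underline{X})\ge L(\underline{X})$.
   Context: For a set $A'$ of parameter values, $\overline{A'}$ denotes the smallest closed simply connected set (closed interval) containing $A'$. An interval $C(\underline{X})$ for $\theta$ is ''$1-\alpha$ exact'' if $\inf_{(\theta,\underline{\eta})\in H}P_{(\theta,\underline{\eta})}(\theta\in C(\underline{X}))\ge1-\alpha$. *)

(* Defs.v *)
From HB Require Import structures.
From mathcomp Require Import all_boot all_order all_algebra.
From mathcomp Require Import all_classical all_reals all_analysis.
From mathcomp Require Import lebesgue_measure measurable_realfun.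
Set Implicit Arguments. Unset Strict Implicit. Unset Printing Implicit Defensive.
Import Order.TTheory GRing.Theory Num.Theory numFieldNormedType.Exports.
Local Open Scope classical_set_scope.
Local Open Scope ring_scope.

Section Defs.
Context {R : realType} {d : measure_display} {T : measurableType d} {Eta : Type}.
Variables (H : set (R * Eta)) (P : R * Eta -> probability T R).
Variables (A B : \bar R) (alpha : R).

Definition cl_hull (S : set R) : set R :=
  \bigcap_(I in [set I : set R | closed I /\ is_interval I /\ S `<=` I]) I.

Definition lower_ci (L : T -> \bar R) (x : T) : set R :=
  [set t : R | (L x <= t%:E)%E /\ (t%:E <= B)%E].

Definition hfun (L : T -> \bar R) (x : T) (theta0 : R) : \bar R :=
  ereal_sup [set P p [set y | (L x <= L y)%E] | p in [set p | H p /\ p.1 <= theta0]].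

Definition CM (L : T -> \bar R) (x : T) : set R :=
  cl_hull [set theta0 : R | (A <= theta0%:E)%E /\ (theta0%:E <= B)%E
                            /\ (alpha%:E < hfun L x theta0)%E].

Definition LM (L : T -> \bar R) (x : T) : \bar R :=
  ereal_inf [set t%:E | t in CM L x].

(* C^{Mk} for k >= 1 is CM (iter (k-1) LM L) ; C^{M oo} is their intersection *)
Definition CMinf (L : T -> \bar R) (x : T) : set R :=
  \bigcap_(k in [set: nat]) CM (iter k LM L) x.

Definition exact (C : T -> set R) : Prop :=
  ((1 - alpha)%:E <= ereal_inf [set P p [set y | C y p.1] | p in H])%E.

Definition class_l (Ll L : T -> \bar R) : Prop :=
  (forall x, (A <= L x)%E) /\
  exact (lower_ci L) /\
  (forall x' x, (Ll x' <= Ll x)%E -> (L x' <= L x)%E) /\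
  (forall x' x, Ll x' = Ll x -> L x' = L x).

End Defs.

(* Main.v *)
Require Import Defs.
From HB Require Import structures.
From mathcomp Require Import all_boot all_order all_algebra.
From mathcomp Require Import all_classical all_reals all_analysis.
From mathcomp Require Import lebesgue_measure measurable_realfun.
From mathcomp Require Import lra.
Import Order.TTheory GRing.Theory Num.Theory numFieldNormedType.Exports.
Local Open Scope classical_set_scope.
Local Open Scope ring_scope.

Section Proofs.
Context (R : realType) (d : measure_display) (T : measurableType d)
  (Eta : Type) (H : set (R * Eta)) (P : R * Eta -> probability T R)
  (A B : \bar R) (alpha : R)
  (halpha : 0 <= alpha <= 1)
  (hH : forall p, H p -> (A <= p.1%:E)%E /\ (p.1%:E <= B)%E)
  (Ll : T -> \bar R)
  (hLl_meas : measurable_fun [set: T] (Ll : T -> \bar R)).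

Local Open Scope ereal_scope.

Lemma upset_meas (Q : set T) :
  (forall y y', Q y -> Ll y <= Ll y' -> Q y') -> measurable Q.
Proof.
move=> up.
set c := ereal_inf (Ll @` Q).
have h1 z : Q z -> c <= Ll z by move=> Qz; apply: ereal_inf_lbound; exists z.
have h2 z : c < Ll z -> Q z.
  by move=> /ereal_inf_lt[_ [y Qy <-]] /ltW; apply: up.
case: (pselect (exists y0, Q y0 /\ Ll y0 = c)) => [[y0 [Qy0 e]]|ne].
- have -> : Q = Ll @^-1` [set` (Interval (BLeft c) (BInfty _ false))].
    apply/seteqP; split => z /=; rewrite in_itv /= andbT.
      by move/h1.
    by move=> cz; apply: (up y0) => //; rewrite e.
  by have := hLl_meas measurableT _ (emeasurable_itv (Interval (BLeft c) (BInfty _ false))); rewrite setTI.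
- have -> : Q = Ll @^-1` [set` (Interval (BRight c) (BInfty _ false))].
    apply/seteqP; split => z /=; rewrite in_itv /= andbT; last exact: h2.
    move=> Qz; rewrite lt_neqAle h1 // andbT; apply/eqP => e.
    by apply: ne; exists z.
  by have := hLl_meas measurableT _ (emeasurable_itv (Interval (BRight c) (BInfty _ false))); rewrite setTI.
Qed.

Lemma downset_meas (Q : set T) :
  (forall y y', Q y -> Ll y' <= Ll y -> Q y') -> measurable Q.
Proof.
move=> down; rewrite -[Q]setCK; apply: measurableC; apply: upset_meas.
by move=> y y' nQy le Qy'; apply: nQy; apply: down Qy' le.
Qed.


Definition mono (L : T -> \bar R) := forall x y, Ll x <= Ll y -> L x <= L y.

Lemma mono_Ll : mono Ll. Proof. by []. Qed.

Lemma mono_up L x : mono L -> measurable [set y | L x <= L y].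
Proof.
move=> mL; apply: upset_meas => y y' /= h le; exact: le_trans h (mL _ _ le).
Qed.

Lemma hfun_cmp L L' x x' t : mono L -> mono L' ->
  (forall y, L x' <= L y -> L' x <= L' y) ->
  hfun H P L x' t <= hfun H P L' x t.
Proof.
move=> mL mL' h; apply: ge_ereal_sup => _ [p Hp <-].
apply: le_ereal_sup_tmp; exists (P p [set y | L' x <= L' y]); first by exists p.
apply: le_measure; rewrite ?inE; [exact: mono_up|exact: mono_up|].
by move=> y /= /h.
Qed.

Lemma hfun_theta L x t1 t2 : (t1 <= t2)%R -> hfun H P L x t1 <= hfun H P L x t2.
Proof.
move=> le; apply: ereal_sup_le => _ [p [Hp pt] <-]; exists p => //.
by split => //; apply: le_trans pt le.
Qed.

Definition Sset L x := [set theta0 : R | (A <= theta0%:E)%E /\ (theta0%:E <= B)%E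
                            /\ (alpha%:E < hfun H P L x theta0)%E].

Lemma CME L x : CM H P A B alpha L x = cl_hull (Sset L x).
Proof. by []. Qed.

Lemma cl_hull_sub (S I : set R) : closed I -> is_interval I -> S `<=` I ->
  cl_hull S `<=` I.
Proof. by move=> cI iI SI z; apply; split. Qed.

Lemma sub_cl_hull (S : set R) : S `<=` cl_hull S.
Proof. by move=> z Sz I [_ [_ SI]]; apply: SI. Qed.

Lemma cl_hull_mono (S1 S2 : set R) : S1 `<=` S2 -> cl_hull S1 `<=` cl_hull S2.
Proof.
move=> S12 z h I [cI [iI SI]]; apply: h; split => //; split => //.
exact: subset_trans SI.
Qed.

Lemma closed_ge_e (e : \bar R) : closed [set t : R | e <= t%:E].
Proof.
case: e => [r| |].
- by under eq_set do rewrite lee_fin; exact: closed_ge.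
- rewrite (_ : [set t : R | +oo <= t%:E] = set0); first exact: closed0.
  by apply/seteqP; split => t //=; rewrite leye_eq.
- rewrite (_ : [set t : R | -oo <= t%:E] = setT); first exact: closedT.
  by apply/seteqP; split => t //= _; rewrite leNye.
Qed.

Lemma closed_le_e (e : \bar R) : closed [set t : R | t%:E <= e].
Proof.
case: e => [r| |].
- by under eq_set do rewrite lee_fin; exact: closed_le.
- rewrite (_ : [set t : R | t%:E <= +oo] = setT); first exact: closedT.
  by apply/seteqP; split => t //= _; rewrite leey.
- rewrite (_ : [set t : R | t%:E <= -oo] = set0); first exact: closed0.
  by apply/seteqP; split => t //=; rewrite leeNy_eq.
Qed.

Lemma itv_ge_e (e : \bar R) : is_interval [set t : R | e <= t%:E].
Proof.
move=> x y /= ex ey z /andP[xz zy]; apply: le_trans ex _; by rewrite lee_fin.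
Qed.

Lemma itv_le_e (e : \bar R) : is_interval [set t : R | t%:E <= e].
Proof.
move=> x y /= ex ey z /andP[xz zy]; apply: le_trans ey; by rewrite lee_fin.
Qed.

Lemma CM_le_B L x : CM H P A B alpha L x `<=` [set t | t%:E <= B].
Proof.
apply: cl_hull_sub; [exact: closed_le_e|exact: itv_le_e|].
by move=> t [_ []].
Qed.

Lemma CM_ge L x m : (forall t, Sset L x t -> m <= t%:E) ->
  CM H P A B alpha L x `<=` [set t | m <= t%:E].
Proof.
move=> h; apply: cl_hull_sub; [exact: closed_ge_e|exact: itv_ge_e|exact: h].
Qed.

Lemma LM_ge_A L x : A <= LM H P A B alpha L x.
Proof.
apply: le_ereal_inf_tmp => _ [t CMt <-].
by apply: (@CM_ge L x A _ t CMt) => t' [].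
Qed.

Lemma LM_le L x t : CM H P A B alpha L x t -> LM H P A B alpha L x <= t%:E.
Proof. by move=> h; apply: ereal_inf_lbound; exists t. Qed.

Lemma CM_anti L x x' : mono L -> L x <= L x' ->
  CM H P A B alpha L x' `<=` CM H P A B alpha L x.
Proof.
move=> mL le; apply: cl_hull_mono => t [a [b h]]; split => //; split => //.
apply: lt_le_trans h _; apply: hfun_cmp => // y; exact: le_trans.
Qed.

Lemma LM_mono0 L x x' : mono L -> L x <= L x' ->
  LM H P A B alpha L x <= LM H P A B alpha L x'.
Proof.
move=> mL le; apply: ereal_inf_le_tmp; apply: image_subset; exact: CM_anti.
Qed.

Lemma LM_mono L : mono L -> mono (LM H P A B alpha L).
Proof. by move=> mL x y /mL; apply: LM_mono0. Qed.

Lemma CM_refine {L L' x} : mono L -> mono L' ->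
  (forall x y, L x <= L y -> L' x <= L' y) ->
  CM H P A B alpha L x `<=` CM H P A B alpha L' x.
Proof.
move=> mL mL' r; apply: cl_hull_mono => t [a [b h]]; split => //; split => //.
by apply: lt_le_trans h _; apply: hfun_cmp => // y; apply: r.
Qed.

Lemma iter_mono k : mono (iter k (LM H P A B alpha) Ll).
Proof. by elim: k => [|k IH] //=; apply: LM_mono. Qed.

Lemma part2 x : CMinf H P A B alpha Ll x = CM H P A B alpha Ll x.
Proof.
apply/seteqP; split => t.
  by move=> h; exact: (h 0%N I).
move=> h k _; elim: k => [|k IH] //=.
apply: (@CM_refine _ _ x (iter_mono k) (iter_mono k.+1) _ t IH).
by move=> y z; apply: LM_mono0; apply: iter_mono.
Qed.


Lemma lim_bound (mu : probability T R) (a : nat -> \bar R) (c : \bar R) :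
  (forall n m, (n <= m)%N -> a m <= a n) ->
  (forall v, c < v -> exists n, a n < v) ->
  (forall n, mu [set z | a n < Ll z] <= alpha%:E) ->
  mu [set z | c < Ll z] <= alpha%:E.
Proof.
move=> anti cv bnd.
pose F := fun n => [set z | a n < Ll z].
have mF n : measurable (F n).
  by apply: upset_meas => y y' /= h le; exact: lt_le_trans h le.
have mU : measurable (\bigcup_n F n) by apply: bigcup_measurable => n _.
have ndF : nondecreasing_seq F.
  by move=> n m nm; apply/subsetPset => z /=; apply: le_lt_trans (anti _ _ nm).
have cvgF := @nondecreasing_cvg_mu _ _ R mu F mF mU ndF.
apply: (@le_trans _ _ (mu (\bigcup_n F n))).
  apply: le_measure; rewrite ?inE //.
    by apply: upset_meas => y y' /= h le; exact: lt_le_trans h le.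
  by move=> z /= /cv [n h]; exists n.
rewrite -(cvg_lim _ cvgF).
apply: lime_le; first exact: cvgP cvgF.
by apply: nearW => n; exact: bnd.
exact: ereal_hausdorff.
Qed.

Lemma pvalue (mu : probability T R) :
  mu [set y | mu [set z | Ll y <= Ll z] <= alpha%:E] <= alpha%:E.
Proof.
have a0 : (0 <= alpha)%R by case/andP: halpha.
pose G y := mu [set z | Ll y <= Ll z].
have mG y : measurable [set z | Ll y <= Ll z] by exact: mono_up.
have Ganti y y' : Ll y <= Ll y' -> G y' <= G y.
  move=> le; apply: le_measure; rewrite ?inE //.
  by move=> z /=; apply: le_trans.
pose D := [set y | G y <= alpha%:E].
have mD : measurable D.
  by apply: upset_meas => y y' /= h le; apply: le_trans (Ganti _ _ le) h.
set c := ereal_inf (Ll @` D).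
have h1 z : D z -> c <= Ll z by move=> Dz; apply: ereal_inf_lbound; exists z.
have hlt v : c < v -> exists y, D y /\ Ll y < v.
  by move=> /ereal_inf_lt[_ [y Dy <-]] h; exists y.
case: (pselect (exists y0, D y0 /\ Ll y0 = c)) => [[y0 [Dy0 e]]|ne].
  apply: le_trans Dy0; apply: le_measure; rewrite ?inE //.
  by move=> z /h1; rewrite e.
have mU : measurable [set z | c < Ll z].
  by apply: upset_meas => y y' /= h le; exact: lt_le_trans h le.
apply: (@le_trans _ _ (mu [set z | c < Ll z])).
  apply: le_measure; rewrite ?inE //.
  move=> z Dz /=; rewrite lt_neqAle h1 // andbT; apply/eqP => e.
  by apply: ne; exists z.
have key (a : nat -> \bar R) : (forall n, c < a n) ->
   (forall n m, (n <= m)%N -> a m <= a n) ->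
   (forall v, c < v -> exists n, a n < v) ->
   mu [set z | c < Ll z] <= alpha%:E.
  move=> ca anti cv; apply: (@lim_bound mu a c anti cv) => n.
  have [y [Dy lty]] := hlt _ (ca n).
  apply: le_trans Dy; apply: le_measure; rewrite ?inE //.
    by apply: upset_meas => u u' /= h le; exact: lt_le_trans h le.
  by move=> z /= /ltW; apply: le_trans; apply: ltW.
case Hc : c => [r| |].
- rewrite -Hc; apply: (key (fun n => (r + n.+1%:R^-1)%:E)).
  + by move=> n; rewrite Hc lte_fin ltrDl invr_gt0 ltr0n.
  + move=> n m nm; rewrite lee_fin lerD2l lef_pV2 ?posrE ?ltr0n //.
    by rewrite ler_nat.
  + rewrite Hc; case=> [s| |] //.
      by rewrite lte_fin => /ltr_add_invr [k hk]; exists k; rewrite lte_fin.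
    by move=> _; exists 0%N; rewrite ltey.
- rewrite (_ : [set z | +oo < Ll z] = set0) ?measure0 ?lee_fin //.
  by apply/seteqP; split => z //=; rewrite ltNge leey.
- rewrite -Hc; apply: (key (fun n => (- n%:R)%:E)).
  + by move=> n; rewrite Hc ltNye.
  + by move=> n m nm; rewrite lee_fin lerN2 ler_nat.
  + rewrite Hc; case=> [s| |] //.
      move=> _; exists (Num.truncn (- s)).+1; rewrite lte_fin ltrNl.
      exact: truncnS_gt.
    by move=> _; exists 0%N; rewrite ltey.
Qed.

Lemma cov p : H p -> (1 - alpha)%:E <= P p [set y | CM H P A B alpha Ll y p.1].
Proof.
move=> Hp.
have mY : measurable [set y | CM H P A B alpha Ll y p.1].
  apply: downset_meas => y y' /= h le.
  exact: (@CM_anti Ll y' y mono_Ll le _ h).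
pose D := [set y | P p [set z | Ll y <= Ll z] <= alpha%:E].
have mD : measurable D.
  apply: upset_meas => y y' /= h le; apply: le_trans h.
  apply: le_measure; rewrite ?inE; [exact: mono_up|exact: mono_up|].
  by move=> z /=; apply: le_trans.
have hD := pvalue (P p).
apply: (@le_trans _ _ (P p (~` D))).
  rewrite probability_setC // EFinB; exact: leeB.
apply: le_measure; rewrite ?inE //; first exact: measurableC.
move=> y /= nD; apply: sub_cl_hull.
have [hA hB] := hH p Hp.
split => //; split => //.
have : alpha%:E < P p [set z | Ll y <= Ll z] by rewrite ltNge; apply/negP.
move/lt_le_trans; apply.
by apply: le_ereal_sup_tmp; exists (P p [set z | Ll y <= Ll z]) => //; exists p.
Qed.


Lemma part1 : exact H P alpha (CM H P A B alpha Ll).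
Proof. by apply: le_ereal_inf_tmp => _ [p Hp <-]; exact: cov. Qed.

Lemma mCM t : measurable [set y | CM H P A B alpha Ll y t].
Proof.
apply: downset_meas => y y' /= h le.
exact: (@CM_anti Ll y' y mono_Ll le _ h).
Qed.

Lemma part3a : class_l H P A B alpha Ll (LM H P A B alpha Ll).
Proof.
split; first by move=> x; exact: LM_ge_A.
split.
  apply: le_ereal_inf_tmp => _ [p Hp <-]; apply: le_trans (@cov p Hp) _.
  apply: le_measure; rewrite ?inE; first exact: mCM.
    apply: downset_meas => y y' [h1 h2] le; split => //.
    exact: le_trans (@LM_mono Ll mono_Ll _ _ le) h1.
  by move=> y /= h; split; [exact: LM_le|exact: CM_le_B h].
split; first by move=> x' x; apply: (@LM_mono Ll mono_Ll).
move=> x' x e; apply/le_anti/andP; split; apply: (@LM_mono Ll mono_Ll); by rewrite e.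
Qed.

Lemma part3b L : class_l H P A B alpha Ll L ->
  forall x, L x <= LM H P A B alpha Ll x.
Proof.
move=> [LA [Lex [Lmono Leq]]] x.
apply: le_ereal_inf_tmp => _ [t CMt <-].
apply: (@CM_ge Ll x (L x) _ t CMt) => t0 [a [b h]].
rewrite leNgt; apply/negP => lt.
move: h; apply/negP; rewrite -leNgt.
apply: ge_ereal_sup => _ [p [Hp pt] <-].
pose E := [set y | lower_ci B L y p.1].
have mE : measurable E.
  apply: downset_meas => y y' [h1 h2] le; split => //.
  exact: le_trans (Lmono _ _ le) h1.
have hE : (1 - alpha)%:E <= P p E.
  apply: le_trans Lex _; apply: ereal_inf_lbound; by exists p.
apply: (@le_trans _ _ (P p (~` E))).
  apply: le_measure; rewrite ?inE; [exact: mono_up|exact: measurableC|].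
  move=> y /= le [h1 _].
  have h3 : L y < L x.
    apply: le_lt_trans h1 _; apply: le_lt_trans lt; by rewrite lee_fin.
  by move: (Lmono _ _ le); rewrite leNgt h3.
rewrite probability_setC //; apply: le_trans (leeB (lexx 1) hE) _.
by rewrite -EFinB lee_fin; lra.
Qed.

End Proofs.

Theorem theorem4 (R : realType) (d : measure_display) (T : measurableType d)
  (Eta : Type) (H : set (R * Eta)) (P : R * Eta -> probability T R)
  (A B : \bar R) (alpha : R)
  (halpha : 0 <= alpha <= 1)
  (hH : forall p, H p -> (A <= p.1%:E)%E /\ (p.1%:E <= B)%E)
  (Ll : T -> \bar R)
  (hLl_meas : measurable_fun [set: T] (Ll : T -> \bar R))
  (hLl_A : forall x, (A <= Ll x)%E) :
  (* (i) *)
  exact H P alpha (CM H P A B alpha Ll) /\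
  (* (ii) *)
  (forall x, CMinf H P A B alpha Ll x = CM H P A B alpha Ll x) /\
  (* (iii) *)
  (class_l H P A B alpha Ll (LM H P A B alpha Ll) /\
   forall L, class_l H P A B alpha Ll L ->
     forall x, (L x <= LM H P A B alpha Ll x)%E).
Proof.
split; first by apply: part1.
split; first by move=> x; apply: part2.
split; first by apply: part3a.
by move=> L hL x; apply: part3b.
Qed.
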